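(* Let $\mathbb{F}_q$ be a finite field and, for $\alpha\in\mathbb{F}_q^*$, let $N_{\mathbb{A}_n}(\alpha)$ be the number of $\mathbb{F}_q$-points of $X_n(\alpha)$. If $n$ is even, then $N_{\mathbb{A}_n}(\alpha)=\frac{q^{n+2}-1}{q^2-1}$ (independently of $\alpha$). If $n$ is odd and $\alpha\neq(-1)^{(n+1)/2}$, then $N_{\mathbb{A}_n}(\alpha)=\frac{(q^{(n+1)/2}-1)(q^{(n+3)/2}-1)}{q^2-1}$. If $n$ is odd, then $N_{\mathbb{A}_n}((-1)^{(n+1)/2})=\frac{(q^{(n+1)/2}-1)(q^{(n+3)/2}-1)}{q^2-1}+q^{(n+1)/2}$.
   Context: For $\alpha$ invertible in a field $\mathbb{K}$ and $n\ge1$, $X_n(\alpha)$ is the affine variety in variables $x_1,\dots,x_n,x'_1,\dots,x'_n$ defined by $x_1x'_1=1+\alpha x_2$, $x_ix'_i=1+x_{i-1}x_{i+1}$ for $2\le i\le n-1$, $x_nx'_n=1+x_{n-1}$ (for $n=1$: $x_1x'_1=1+\alpha$). By convention $X_0(\alpha)$ is a point. For $n$ even, $X_n(\alpha)$ does not depend on $\alpha$ up to isomorphism. *)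

(* Defs.v *)
From HB Require Import structures.
From mathcomp Require Import all_boot all_order all_algebra.
Set Implicit Arguments. Unset Strict Implicit. Unset Printing Implicit Defensive.
Import GRing.Theory Num.Theory.
Local Open Scope ring_scope.

(* Extended coordinates (1-based indexing k = 0..n+1):
   ext 0 = alpha, ext k = x_k for 1 <= k <= n, ext (n+1) = 1.
   Then the defining equations of X_n(alpha) read uniformly
   x_i x'_i = 1 + ext (i-1) * ext (i+1), for 1 <= i <= n:
   i = 1 : x_1 x'_1 = 1 + alpha x_2  (n = 1 : 1 + alpha)
   i = n : x_n x'_n = 1 + x_{n-1}. *)
Definition ext_coord (F : nzRingType) (n : nat) (alpha : F) (x : {ffun 'I_n -> F})
  (k : nat) : F :=
  if k == 0%N then alpha
  else if (k <= n)%N then (if insub k.-1 is Some i then x i else 0)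
  else 1.

Definition Xn_points (F : finFieldType) (n : nat) (alpha : F) :
  {set {ffun 'I_n -> F} * {ffun 'I_n -> F}} :=
  [set p : {ffun 'I_n -> F} * {ffun 'I_n -> F} | [forall i : 'I_n,
     p.1 i * p.2 i == 1 + ext_coord alpha p.1 i * ext_coord alpha p.1 i.+2]].

Definition N_A (F : finFieldType) (n : nat) (alpha : F) : nat :=
  #|Xn_points n alpha|.

(* Main.v *)
Require Import Defs.
From HB Require Import structures.
From mathcomp Require Import all_boot all_order all_algebra.
From mathcomp Require Import ring lra.
Set Implicit Arguments. Unset Strict Implicit.
Import GRing.Theory Num.Theory.
Local Open Scope ring_scope.

Section S.
Variable F : finFieldType.

Definition cnt (a b : F) : nat := #|[set y : F | a * y == b]|.

Lemma cntE a b : cnt a b = if a != 0 then 1%N else if b == 0 then #|F| else 0%N.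
Proof.
rewrite /cnt; case: ifP => ha.
  rewrite (_ : [set y | a * y == b] = [set b / a]) ?cards1 //; apply/setP => y; rewrite !inE.
  apply/eqP/eqP => [<-|->]; first by rewrite mulrC mulKf.
  by rewrite mulrC divfK.
move/negbFE/eqP: ha => ->; case: ifP => hb.
  rewrite (_ : [set y | 0 * y == b] = setT) ?cardsT //; apply/setP => y; by rewrite !inE mul0r eq_sym hb.
rewrite (_ : [set y | 0 * y == b] = set0) ?cards0 //; apply/setP => y; by rewrite !inE mul0r eq_sym hb.
Qed.

Lemma extS n a (x : {ffun 'I_n -> F}) (i : 'I_n) : ext_coord a x i.+1 = x i.
Proof. by rewrite /ext_coord /= ltn_ord /= valK. Qed.

Lemma ext0 n a (x : {ffun 'I_n -> F}) : ext_coord a x 0 = a.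
Proof. by []. Qed.

Lemma extG n a (x : {ffun 'I_n -> F}) k : (n < k)%N -> ext_coord a x k = 1.
Proof.
move=> h; rewrite /ext_coord; case: eqP => [e|_]; first by rewrite e in h.
by rewrite leqNgt h.
Qed.

Definition consf n (t : F) (y : {ffun 'I_n -> F}) : {ffun 'I_n.+1 -> F} :=
  [ffun i : 'I_n.+1 => ext_coord t y i].

Lemma ext_cons n a t (y : {ffun 'I_n -> F}) k :
  ext_coord a (consf t y) k.+1 = ext_coord t y k.
Proof.
case: (leqP k n) => hk.
  have hk' : (k < n.+1)%N by [].
  by rewrite (extS a (consf t y) (Ordinal hk')) ffunE.
by rewrite !extG.
Qed.

Lemma consf0 n t (y : {ffun 'I_n -> F}) : consf t y ord0 = t.
Proof. by rewrite ffunE. Qed.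

Lemma sumcons n (G : {ffun 'I_n.+1 -> F} -> nat) :
  (\sum_x G x = \sum_t \sum_(y : {ffun 'I_n -> F}) G (consf t y))%N.
Proof.
rewrite pair_big /= (reindex (fun p : F * {ffun 'I_n -> F} => consf p.1 p.2)) //=.
exists (fun x => (x ord0, [ffun j => x (lift ord0 j)])) => [[t y] _|x _] /=.
  rewrite consf0; congr (_, _); apply/ffunP => j; by rewrite !ffunE extS.
apply/ffunP => i; rewrite ffunE.
case: i => [[|k] hk].
  by rewrite ext0; congr (x _); apply: val_inj.
have hk' : (k < n)%N by [].
rewrite (extS _ _ (Ordinal hk')) ffunE; congr (x _); exact: val_inj.
Qed.

Definition Q n a (x : {ffun 'I_n -> F}) : nat :=
  (\prod_(i < n) cnt (x i) (1 + ext_coord a x i * ext_coord a x i.+2)%R)%N.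

Definition P n a : nat := (\sum_(x : {ffun 'I_n -> F}) Q a x)%N.

Lemma Qcons n a t (y : {ffun 'I_n -> F}) :
  Q a (consf t y) = (cnt t (1 + a * ext_coord t y 1)%R * Q t y)%N.
Proof.
rewrite /Q big_ord_recl consf0 ext0 ext_cons; congr (_ * _)%N.
apply: eq_bigr => i _; rewrite /= ext_cons ext_cons.
by rewrite -(extS a (consf t y) (lift ord0 i)) /= ext_cons extS.
Qed.


Lemma prod_bool (I : finType) (B : pred I) :
  (\prod_i (B i : nat) = [forall i, B i])%N.
Proof.
case: (boolP [forall i, B i]) => [/forallP H|].
  by rewrite big1 // => i _; rewrite H.
rewrite negb_forall => /existsP [i Hi].
by rewrite (bigD1 i) //= (negbTE Hi) mul0n.
Qed.

Lemma NA_P n a : N_A n a = P n a.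
Proof.
pose G := fun (x y : {ffun 'I_n -> F}) => if [forall i, x i * y i == 1 + ext_coord a x i * ext_coord a x i.+2] then 1%N else 0%N.
transitivity (\sum_x \sum_y G x y)%N; last first.
  apply: eq_bigr => x _ /=.
  transitivity (\prod_i \sum_j ((x i * j == 1 + ext_coord a x i * ext_coord a x i.+2)%R : nat))%N.
    rewrite bigA_distr_bigA /=.
    apply: eq_bigr => y _; rewrite prod_bool /G.
    by case: [forall i, _].
  apply: eq_bigr => i _; rewrite /cnt -sum1_card [RHS]big_mkcond.
  apply: eq_bigr => j _; by rewrite inE.
rewrite pair_bigA /N_A /Xn_points -sum1_card big_mkcond.
apply: eq_bigr => p _; by rewrite inE.
Qed.

Lemma P0 a : P 0 a = 1%N.
Proof.
rewrite /P /Q (eq_bigr (fun _ => 1%N)) => [|x _]; last by rewrite big_ord0.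
by rewrite sum1_card card_ffun card_ord expn0.
Qed.

Lemma Pcons n a : P n.+1 a =
  (\sum_t \sum_(y : {ffun 'I_n -> F}) cnt t (1 + a * ext_coord t y 1)%R * Q t y)%N.
Proof.
by rewrite /P sumcons; apply: eq_bigr => t _; apply: eq_bigr => y _; rewrite Qcons.
Qed.

Lemma sum_nz (c : nat) : (\sum_(t : F | t != 0%R) c = (#|F| - 1) * c)%N.
Proof. by rewrite sum_nat_const cardC1 subn1. Qed.

Lemma P1 a : P 1 a = (#|F| - 1 + (1 + a == 0)%R * #|F|)%N.
Proof.
rewrite Pcons.
rewrite (eq_bigr (fun t => cnt t (1 + a))) => [|t _]; last first.
  rewrite (eq_bigr (fun _ => cnt t (1 + a))) => [|y _].
    by rewrite sum_nat_const card_ffun card_ord expn0 mul1n.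
  by rewrite extG // /Q big_ord0 muln1 mulr1.
rewrite (bigD1 0) //= (eq_bigr (fun _ => 1%N)) => [|t ht]; last by rewrite cntE ht.
rewrite sum_nz muln1 cntE eqxx /= addnC.
by case: (_ == _); rewrite ?mul1n ?mul0n.
Qed.

Lemma eq_inv (a u : F) : a != 0 -> (1 + a * u == 0) = (u == - a^-1).
Proof.
move=> ha; rewrite addrC addr_eq0.
apply/eqP/eqP => [h|->]; last by rewrite mulrN mulfV.
have -> : u = a^-1 * (a * u) by rewrite mulKf.
by rewrite h mulrN1.
Qed.

Lemma Prec m a : a != 0 ->
  P m.+2 a = (\sum_(t | t != 0%R) P m.+1 t + #|F| * P m (- a^-1)%R)%N.
Proof.
move=> ha; rewrite Pcons (bigD1 0) //= addnC; congr (_ + _)%N.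
  apply: eq_bigr => t ht; rewrite /P; apply: eq_bigr => y _; by rewrite cntE ht mul1n.
rewrite sumcons.
rewrite (bigD1 (- a^-1)) //= [X in (_ + X)%N]big1 => [|u hu]; last first.
  apply: big1 => z _; rewrite ext_cons ext0 cntE eqxx /= eq_inv // (negbTE hu).
  by rewrite mul0n.
rewrite addn0 /P big_distrr /=; apply: eq_bigr => z _.
rewrite ext_cons ext0 Qcons cntE eqxx /= eq_inv // eqxx.
rewrite cntE oppr_eq0 invr_eq0 ha /=; by rewrite mul1n.
Qed.

Definition q : rat := (#|F|)%:R.

Definition V n (a : F) : rat :=
  if odd n then
    (q ^+ (n.+1)./2 - 1) * (q ^+ (n.+3)./2 - 1) / (q ^+ 2 - 1)
     + (a == (-1) ^+ (n.+1)./2)%:R * q ^+ (n.+1)./2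
  else (q ^+ n.+2 - 1) / (q ^+ 2 - 1).

Lemma q_gt1 : 1 < q.
Proof. by rewrite /q ltr1n card_finNzRing_gt1. Qed.

Lemma d_neq0 : q ^+ 2 - 1 != 0.
Proof. have := q_gt1 => h; apply: lt0r_neq0; nra. Qed.

Lemma sumnz_r (c : rat) : \sum_(t : F | t != 0) c = (q - 1) * c.
Proof.
rewrite sumr_const cardC1 -mulr_natl /q; congr (_ * _).
have := card_finNzRing_gt1 F; case: #|F| => [|k] //= _.
by rewrite -natr1 addrK.
Qed.

Lemma sum_ind (c : F) (r : rat) : c != 0 ->
  \sum_(t : F | t != 0) (t == c)%:R * r = r.
Proof.
move=> hc; rewrite (bigD1 c) //= eqxx mul1r big1 ?addr0 // => t /andP [_ ht].
by rewrite (negbTE ht) mul0r.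
Qed.

Lemma sign_neq0 k : ((-1) ^+ k : F) != 0.
Proof. by rewrite expf_neq0 // oppr_eq0 oner_eq0. Qed.

Lemma inv_sign (a : F) k : a != 0 -> (- a^-1 == (-1) ^+ k) = (a == (-1) ^+ k.+1).
Proof.
move=> ha; apply/eqP/eqP => h.
  have h2 : a^-1 = (-1) ^+ k.+1 by rewrite exprS mulN1r -h opprK.
  by rewrite -[a]invrK h2 -exprVn invrN1.
by rewrite h -exprVn invrN1 exprS mulN1r opprK.
Qed.

Lemma PrecR n a : a != 0 ->
  (P n.+2 a)%:R = \sum_(t | t != 0) (P n.+1 t)%:R + q * (P n (- a^-1))%:R :> rat.
Proof. by move=> ha; rewrite Prec // natrD natr_sum natrM. Qed.

Lemma ind m :
  (forall a, a != 0 -> (P (m.*2) a)%:R = V (m.*2) a) /\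
  (forall a, a != 0 -> (P (m.*2.+1) a)%:R = V (m.*2.+1) a).
Proof.
have hd := d_neq0.
elim: m => [|m [IH0 IH1]].
  split=> a ha.
    by rewrite P0 /V /= divff.
  rewrite P1 /V /= expr1 addrC addr_eq0 natrD natrM natrB; last exact: ltnW (card_finNzRing_gt1 F).
  rewrite -/q; field.
  by rewrite expr2 in hd.
have E : forall a, a != 0 -> (P m.*2.+2 a)%:R = V m.*2.+2 a.
  move=> a ha; rewrite PrecR // (eq_bigr (fun t => V m.*2.+1 t)) => [|t /IH1 //].
  rewrite IH0 ?oppr_eq0 ?invr_eq0 //.
  rewrite /V /= odd_double /= big_split /= sumnz_r sum_ind ?sign_neq0 //.
  rewrite doubleK !exprS -muln2 exprM !exprS !expr0.
  rewrite !exprS expr0 in hd.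
  field; by rewrite !mulr1 in hd *.
rewrite doubleS; split => // a ha.
rewrite PrecR // (eq_bigr (fun t => V m.*2.+2 t)) => [|t /E //].
rewrite IH1 ?oppr_eq0 ?invr_eq0 //.
rewrite /V /= odd_double /= sumnz_r /= doubleK inv_sign //.
case: (a == _); rewrite ?mul1r ?mul0r ?addr0;
  rewrite -muln2 !exprS exprM !exprS !expr0;
  rewrite !exprS expr0 in hd;
  field; by rewrite !mulr1 in hd *.
Qed.
End S.

Theorem mainTheorem6 (F : finFieldType) (n : nat) (alpha : F) :
  (0 < n)%N -> alpha != 0 ->
  let q : rat := (#|F|)%:R in
  [/\ ~~ odd n ->
        (N_A n alpha)%:R = (q ^+ n.+2 - 1) / (q ^+ 2 - 1),
      odd n -> alpha != (-1) ^+ (n.+1)./2 ->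
        (N_A n alpha)%:R =
          (q ^+ (n.+1)./2 - 1) * (q ^+ (n.+3)./2 - 1) / (q ^+ 2 - 1)
    & odd n -> alpha = (-1) ^+ (n.+1)./2 ->
        (N_A n alpha)%:R =
          (q ^+ (n.+1)./2 - 1) * (q ^+ (n.+3)./2 - 1) / (q ^+ 2 - 1)
          + q ^+ (n.+1)./2].
Proof.
move=> _ ha q0.
have key : (N_A n alpha)%:R = V n alpha.
  have [H0 H1] := ind F (n./2).
  have hn := odd_double_half n.
  rewrite NA_P; case: (odd n) hn => /= <-; [exact: H1 | exact: H0].
rewrite key /V /q0 /q; split => ho; rewrite ?(negbTE ho) ?ho //.
  by move=> /negbTE ->; rewrite mul0r addr0.
by move=> ->; rewrite eqxx mul1r.
Qed.
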